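(* Let $\mathscr M\subset ba(\mathcal A)$ and $\mathcal L(\mathscr M)=\{\nu\in ba(\mathcal A):\nu\ll m\text{ for some }m\in\mathbf A(\mathscr M)\}$. Then $\mathcal L(\mathscr M)=(\mathscr M^\perp)^\perp$, where for $\mathscr N\subset ba(\mathcal A)$, $\mathscr N^\perp=\{\nu\in ba(\mathcal A):\nu\perp\mu\text{ for all }\mu\in\mathscr N\}$.
   Context: $\Omega$ is a set, $\mathcal A$ an algebra of subsets of $\Omega$, $ba(\mathcal A)$ the Banach lattice of bounded finitely additive real set functions on $\mathcal A$ with norm $\|\mu\|=|\mu|(\Omega)$, $|\mu|$ the total variation. For $\lambda,\mu\in ba(\mathcal A)$: $\mu\ll\lambda$ means for every $\varepsilon>0$ there is $\delta>0$ with $|\lambda|(A)<\delta\Rightarrow|\mu|(A)<\varepsilon$; $\mu\perp\lambda$ means for every $\varepsilon>0$ there is $A\in\mathcal A$ with $|\mu|(A)+|\lambda|(A^c)<\varepsilon$. $\mathbf A(\mathscr M)=\{\sum_n\alpha_n\frac{|\mu_n|}{1\vee\|\mu_n\|}:\mu_n\in\mathscr M,\ \alpha_n\ge0,\ \sum_n\alpha_n=1\}$. *)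

(* Defs.v *)
From Stdlib Require Import Reals Lra List Classical ClassicalEpsilon.
Open Scope R_scope.

Set Implicit Arguments.
Section BA.
Variable Omega : Type.
(* Subsets of Omega are predicates; a set function maps subsets to reals
   (only its values on the algebra matter). *)
Definition set := Omega -> Prop.
Definition setfun := set -> R.

Definition setT : set := fun _ => True.
Definition setC (A : set) : set := fun x => ~ A x.
Definition setU (A B : set) : set := fun x => A x \/ B x.
Definition disj (A B : set) : Prop := forall x, A x -> B x -> False.

Record is_algebra (alg : set -> Prop) : Prop := {
  alg_T : alg setT;
  alg_C : forall A, alg A -> alg (setC A);
  alg_U : forall A B, alg A -> alg B -> alg (setU A B)
}.

Variable alg : set -> Prop.

Definition is_ba (mu : setfun) : Prop :=
  (forall A B, alg A -> alg B -> disj A B -> mu (setU A B) = mu A + mu B) /\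
  (exists K, forall A, alg A -> Rabs (mu A) <= K).

Definition partition_sums (mu : setfun) (A : set) (s : R) : Prop :=
  exists l : list set,
    Forall alg l /\ ForallOrdPairs disj l /\
    (forall x, A x <-> exists B, In B l /\ B x) /\
    s = fold_right (fun B acc => Rabs (mu B) + acc) 0 l.

Definition tv (mu : setfun) (A : set) : R :=
  epsilon (inhabits 0) (fun v => is_lub (partition_sums mu A) v).

Definition ba_norm (mu : setfun) : R := tv mu setT.

Definition abs_cont (mu lam : setfun) : Prop :=
  forall eps, 0 < eps -> exists delta, 0 < delta /\
    forall A, alg A -> tv lam A < delta -> tv mu A < eps.

Definition singular (mu lam : setfun) : Prop :=
  forall eps, 0 < eps -> exists A, alg A /\ tv mu A + tv lam (setC A) < eps.

Definition convA (M : setfun -> Prop) (m : setfun) : Prop :=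
  exists (mus : nat -> setfun) (alpha : nat -> R),
    (forall n, M (mus n)) /\ (forall n, 0 <= alpha n) /\
    infinite_sum alpha 1 /\
    forall A, alg A ->
      infinite_sum (fun n => alpha n * tv (mus n) A / Rmax 1 (ba_norm (mus n))) (m A).

Definition Lset (M : setfun -> Prop) (nu : setfun) : Prop :=
  is_ba nu /\ exists m, convA M m /\ abs_cont nu m.

Definition perp (N : setfun -> Prop) (nu : setfun) : Prop :=
  is_ba nu /\ forall mu, N mu -> singular nu mu.

End BA.

(* Main.v *)
Require Import Defs.
From Stdlib Require Import Reals List Classical ClassicalEpsilon Lra Psatz Lia Arith.Cantor FunctionalExtensionality PropExtensionality.
Open Scope R_scope.

Section TV.
Variable Omega : Type.
Variable alg : set Omega -> Prop.
Hypothesis Halg : is_algebra alg.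

Lemma set_ext (A B : set Omega) : (forall x, A x <-> B x) -> A = B.
Proof. intro H; apply functional_extensionality; intro x; apply propositional_extensionality; auto. Qed.

Definition setI (A B : set Omega) : set Omega := fun x => A x /\ B x.
Definition set0 : set Omega := setC (@setT Omega).
Definition Ul (l : list (set Omega)) : set Omega := fun x => exists B, In B l /\ B x.
Definition sumabs (mu : setfun Omega) l := fold_right (fun B acc => Rabs (mu B) + acc) 0 l.
Definition sumv (mu : setfun Omega) l := fold_right (fun B acc => mu B + acc) 0 l.
Definition addf (mu : setfun Omega) := forall A B, alg A -> alg B -> disj A B -> mu (setU A B) = mu A + mu B.

Lemma alg_0 : alg set0.
Proof. apply (alg_C Halg), (alg_T Halg). Qed.

Lemma setCC (A : set Omega) : setC (setC A) = A.
Proof. apply set_ext; intro x; unfold setC; split; [apply NNPP| tauto]. Qed.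

Lemma alg_I (A B : set Omega) : alg A -> alg B -> alg (setI A B).
Proof.
  intros HA HB.
  replace (setI A B) with (setC (setU (setC A) (setC B))).
  - apply (alg_C Halg), (alg_U Halg); apply (alg_C Halg); auto.
  - apply set_ext; intro x; unfold setC, setU, setI; split.
    + intro H; split; apply NNPP; tauto.
    + tauto.
Qed.

Lemma setU0 : setU set0 set0 = set0.
Proof. apply set_ext; intro x; unfold setU, set0, setC, setT; tauto. Qed.

Lemma add0 mu : addf mu -> mu set0 = 0.
Proof.
  intro H. pose proof (H set0 set0 alg_0 alg_0) as E.
  rewrite setU0 in E. assert (disj set0 set0) by (intros x a b; unfold set0, setC, setT in a; tauto).
  specialize (E H0); lra.
Qed.

Lemma Ul_nil : Ul nil = set0.
Proof. apply set_ext; intro x; unfold Ul, set0, setC, setT; simpl; split; [intros [B [[] _]] | tauto]. Qed.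

Lemma Ul_cons B l : Ul (B :: l) = setU B (Ul l).
Proof.
  apply set_ext; intro x; unfold Ul, setU; simpl; split.
  - intros [C [[<-|HC] Cx]]; [left; auto | right; eauto].
  - intros [Bx | [C [HC Cx]]]; eauto.
Qed.

Lemma alg_Ul l : Forall alg l -> alg (Ul l).
Proof.
  induction 1. rewrite Ul_nil; apply alg_0.
  rewrite Ul_cons; apply (alg_U Halg); auto.
Qed.

Lemma disj_Ul B l : Forall (disj B) l -> disj B (Ul l).
Proof. intros H x Bx [C [HC Cx]]. rewrite Forall_forall in H. exact (H C HC x Bx Cx). Qed.

Lemma add_list mu l : addf mu -> Forall alg l -> ForallOrdPairs (@disj Omega) l -> mu (Ul l) = sumv mu l.
Proof.
  intros Hmu. induction l as [|B l IH]; intros HF HD.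
  - rewrite Ul_nil; simpl; apply add0; auto.
  - inversion HF; inversion HD; subst. rewrite Ul_cons. simpl.
    rewrite Hmu; auto. rewrite IH; auto. apply alg_Ul; auto. apply disj_Ul; auto.
Qed.

Definition posb (mu : setfun Omega) (B : set Omega) : bool := if Rle_dec 0 (mu B) then true else false.

Lemma sign_split mu l : sumabs mu l + sumv mu l = 2 * sumv mu (filter (posb mu) l).
Proof.
  induction l as [|B l IH]; simpl. lra.
  unfold posb at 1. destruct (Rle_dec 0 (mu B)).
  - simpl. rewrite Rabs_right by lra. lra.
  - rewrite Rabs_left by lra. lra.
Qed.

Lemma Forall_filter' {A} (P : A -> Prop) f l : Forall P l -> Forall P (filter f l).
Proof. induction 1; simpl; auto. destruct (f x); auto. Qed.

Lemma FOP_filter {A} (R : A -> A -> Prop) f l : ForallOrdPairs R l -> ForallOrdPairs R (filter f l).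
Proof. intro H; induction H as [|a l0 Ha Hl IH]; simpl; [constructor|]. destruct (f a); auto. constructor; auto. apply Forall_filter'; auto. Qed.

Lemma Rabs_le_between x K : Rabs x <= K -> -K <= x <= K.
Proof. unfold Rabs; destruct (Rcase_abs x); intros; lra. Qed.

Definition partl (A : set Omega) l := Forall alg l /\ ForallOrdPairs (@disj Omega) l /\ A = Ul l.

Lemma partition_sums_iff mu A s : partition_sums alg mu A s <-> exists l, partl A l /\ s = sumabs mu l.
Proof.
  split.
  - intros [l [H1 [H2 [H3 H4]]]]. exists l; split; [split; [|split]|]; auto. apply set_ext; auto.
  - intros [l [[H1 [H2 H3]] H4]]. exists l; split; [|split; [|split]]; auto.
    intro x; subst A; tauto.
Qed.

Lemma sumabs_bound mu K A l : addf mu -> (forall A, alg A -> Rabs (mu A) <= K) -> partl A l ->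
  sumabs mu l <= 3 * K.
Proof.
  intros Ha HK [H1 [H2 H3]].
  pose proof (sign_split mu l) as E.
  rewrite <- !add_list in E; auto; try apply Forall_filter'; auto; try apply FOP_filter; auto.
  pose proof (HK _ (alg_Ul _ (Forall_filter' _ (posb mu) _ H1))).
  pose proof (HK _ (alg_Ul _ H1)).
  apply Rabs_le_between in H; apply Rabs_le_between in H0. lra.
Qed.

Lemma partl_single A : alg A -> partl A (A :: nil).
Proof.
  intro HA; split; [|split].
  - constructor; auto.
  - constructor; constructor.
  - apply set_ext; intro x; unfold Ul; simpl; split; [intro; exists A; auto | intros [B [[<-|[]] Bx]]; auto].
Qed.

Lemma tv_spec mu A : is_ba alg mu -> alg A -> is_lub (partition_sums alg mu A) (tv alg mu A).
Proof.
  intros [Ha [K HK]] HA.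
  assert (Hex : exists v, is_lub (partition_sums alg mu A) v).
  { destruct (completeness (partition_sums alg mu A)) as [v Hv].
    - exists (3 * K). intros s Hs. apply partition_sums_iff in Hs as [l [Hl ->]].
      eapply sumabs_bound; eauto.
    - exists (Rabs (mu A) + 0). apply partition_sums_iff. exists (A :: nil); split; auto.
      apply partl_single; auto.
    - exists v; auto. }
  unfold tv. apply (epsilon_spec (inhabits 0) _ Hex).
Qed.


Definition pa (w : setfun Omega) := is_ba alg w /\ forall A, alg A -> 0 <= w A.

Lemma ba_add mu : is_ba alg mu -> addf mu.
Proof. intros [H _]; exact H. Qed.

Lemma tv_ge mu A : is_ba alg mu -> alg A -> Rabs (mu A) <= tv alg mu A.
Proof.
  intros Hb HA. apply (tv_spec mu A Hb HA). apply partition_sums_iff.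
  exists (A :: nil); split. apply partl_single; auto. simpl; ring.
Qed.

Lemma tv_nonneg mu A : is_ba alg mu -> alg A -> 0 <= tv alg mu A.
Proof. intros; eapply Rle_trans; [apply Rabs_pos| apply tv_ge; auto]. Qed.

Lemma tv_ge_val mu A : is_ba alg mu -> alg A -> mu A <= tv alg mu A.
Proof. intros; eapply Rle_trans; [apply RRle_abs| apply tv_ge; auto]. Qed.

Lemma FOP_app {A} (R : A -> A -> Prop) l1 l2 : ForallOrdPairs R l1 -> ForallOrdPairs R l2 ->
  (forall x y, In x l1 -> In y l2 -> R x y) -> ForallOrdPairs R (l1 ++ l2).
Proof.
  intros H1; induction H1 as [|a l Ha Hl IH]; intros H2 H; simpl; auto.
  constructor.
  - apply Forall_app; split; auto. rewrite Forall_forall; intros; apply H; simpl; auto.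
  - apply IH; auto. intros; apply H; simpl; auto.
Qed.

Lemma FOP_map {A B} (R : A -> A -> Prop) (R' : B -> B -> Prop) (f : A -> B) l :
  ForallOrdPairs R l -> (forall x y, R x y -> R' (f x) (f y)) -> ForallOrdPairs R' (map f l).
Proof.
  intros H1 H; induction H1 as [|a l Ha Hl IH]; simpl; constructor; auto.
  apply Forall_map. eapply Forall_impl; [|exact Ha]. auto.
Qed.

Lemma sumabs_app mu l1 l2 : sumabs mu (l1 ++ l2) = sumabs mu l1 + sumabs mu l2.
Proof. induction l1; simpl; [ring| rewrite IHl1; ring]. Qed.

Lemma Ul_app l1 l2 : Ul (l1 ++ l2) = setU (Ul l1) (Ul l2).
Proof.
  apply set_ext; intro x; unfold Ul, setU; split.
  - intros [B [HB Bx]]; apply in_app_or in HB as [HB|HB]; eauto.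
  - intros [[B [HB Bx]]|[B [HB Bx]]]; exists B; split; auto; apply in_or_app; auto.
Qed.

Lemma lub_le E v c : is_lub E v -> (forall s, E s -> s <= c) -> v <= c.
Proof. intros [_ H] Hc; apply H; exact Hc. Qed.

Lemma tv_add mu A B : is_ba alg mu -> alg A -> alg B -> disj A B ->
  tv alg mu (setU A B) = tv alg mu A + tv alg mu B.
Proof.
  intros Hb HA HB HD.
  assert (HAB : alg (setU A B)) by (apply (alg_U Halg); auto).
  pose proof (tv_spec mu A Hb HA) as SA. pose proof (tv_spec mu B Hb HB) as SB.
  pose proof (tv_spec mu _ Hb HAB) as SAB.
  apply Rle_antisym.
  - apply (lub_le _ _ _ SAB). intros s Hs. apply partition_sums_iff in Hs as [l [[H1 [H2 H3]] ->]].
    assert (Hsub : forall C, In C l -> forall x, C x -> setU A B x).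
    { intros C HC x Cx. rewrite H3. exists C; auto. }
    set (lA := map (fun C => setI C A) l). set (lB := map (fun C => setI C B) l).
    assert (PA : partl A lA).
    { split; [|split].
      - unfold lA; apply Forall_map; eapply Forall_impl; [|exact H1]; intros; apply alg_I; auto.
      - unfold lA; eapply FOP_map; eauto. intros C D HCD x [Cx _] [Dx _]; eapply HCD; eauto.
      - apply set_ext; intro x; split.
        + intro Ax. assert (Ul l x) by (rewrite <- H3; left; auto). destruct H as [C [HC Cx]].
          exists (setI C A); split; [apply (in_map (fun C => setI C A)); auto| split; auto].
        + intros [D [HD' Dx]]. unfold lA in HD'; apply in_map_iff in HD' as [C [<- _]]. apply Dx. }
    assert (PB : partl B lB).
    { split; [|split].
      - unfold lB; apply Forall_map; eapply Forall_impl; [|exact H1]; intros; apply alg_I; auto.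
      - unfold lB; eapply FOP_map; eauto. intros C D HCD x [Cx _] [Dx _]; eapply HCD; eauto.
      - apply set_ext; intro x; split.
        + intro Bx. assert (Ul l x) by (rewrite <- H3; right; auto). destruct H as [C [HC Cx]].
          exists (setI C B); split; [apply (in_map (fun C => setI C B)); auto| split; auto].
        + intros [D [HD' Dx]]. unfold lB in HD'; apply in_map_iff in HD' as [C [<- _]]. apply Dx. }
    assert (sumabs mu l <= sumabs mu lA + sumabs mu lB).
    { unfold lA, lB. clear PA PB H2 H3 lA lB. induction l as [|C l IH]; simpl. lra.
      inversion H1; subst.
      assert (E : C = setU (setI C A) (setI C B)).
      { apply set_ext; intro x; unfold setU, setI; split; [|tauto].
        intro Cx; destruct (Hsub C (or_introl eq_refl) x Cx); tauto. }
      assert (mu C = mu (setI C A) + mu (setI C B)).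
      { rewrite E at 1. apply (ba_add _ Hb (setI C A) (setI C B)); try apply alg_I; auto. intros x [_ a] [_ b]; eapply HD; eauto. }
      rewrite H. pose proof (Rabs_triang (mu (setI C A)) (mu (setI C B))).
      assert (sumabs mu l <= sumabs mu (map (fun C0 => setI C0 A) l) + sumabs mu (map (fun C0 => setI C0 B) l)).
      { apply IH; auto. intros C0 HC0; apply (Hsub C0); simpl; auto. }
      lra. }
    assert (sumabs mu lA <= tv alg mu A) by (apply SA, partition_sums_iff; eauto).
    assert (sumabs mu lB <= tv alg mu B) by (apply SB, partition_sums_iff; eauto).
    lra.
  - assert (K : forall lA lB, partl A lA -> partl B lB -> sumabs mu lA + sumabs mu lB <= tv alg mu (setU A B)).
    { intros lA lB [a1 [a2 a3]] [b1 [b2 b3]]. rewrite <- sumabs_app. apply SAB, partition_sums_iff.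
      exists (lA ++ lB); split; auto. split; [|split].
      - apply Forall_app; auto.
      - apply FOP_app; auto. intros C D HC HD' x Cx Dx. apply (HD x).
        rewrite a3; exists C; auto. rewrite b3; exists D; auto.
      - rewrite Ul_app, <- a3, <- b3; auto. }
    assert (forall lB, partl B lB -> tv alg mu A <= tv alg mu (setU A B) - sumabs mu lB).
    { intros lB HlB. apply (lub_le _ _ _ SA). intros s Hs; apply partition_sums_iff in Hs as [lA [HlA ->]].
      specialize (K lA lB HlA HlB); lra. }
    assert (tv alg mu B <= tv alg mu (setU A B) - tv alg mu A).
    { apply (lub_le _ _ _ SB). intros s Hs; apply partition_sums_iff in Hs as [lB [HlB ->]].
      specialize (H lB HlB); lra. }
    lra.
Qed.

Lemma setD_split (A B : set Omega) : (forall x, B x -> A x) -> A = setU B (setI A (setC B)).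
Proof. intro H; apply set_ext; intro x; unfold setU, setI, setC; split; [|firstorder].
  intro Ax; destruct (classic (B x)); tauto. Qed.

Lemma alg_D (A B : set Omega) : alg A -> alg B -> alg (setI A (setC B)).
Proof. intros; apply alg_I; auto; apply (alg_C Halg); auto. Qed.

Lemma disj_D (A B : set Omega) : disj B (setI A (setC B)).
Proof. intros x a [_ b]; auto. Qed.

Lemma tv_mono mu A B : is_ba alg mu -> alg A -> alg B -> (forall x, B x -> A x) -> tv alg mu B <= tv alg mu A.
Proof.
  intros Hb HA HB Hs. rewrite (setD_split A B Hs), tv_add; auto using alg_D, disj_D.
  pose proof (tv_nonneg mu _ Hb (alg_D A B HA HB)); lra.
Qed.

Lemma sumv_sumabs_pa w l : (forall B, In B l -> 0 <= w B) -> sumabs w l = sumv w l.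
Proof. induction l; simpl; intros; auto. rewrite Rabs_right, IHl; auto. apply Rle_ge; auto. Qed.

Lemma tv_pa w A : pa w -> alg A -> tv alg w A = w A.
Proof.
  intros [Hb Hn] HA. apply (is_lub_u _ _ _ (tv_spec w A Hb HA)). split.
  - intros s Hs; apply partition_sums_iff in Hs as [l [[H1 [H2 H3]] ->]].
    rewrite sumv_sumabs_pa, H3, add_list; [lra| |auto|auto|]. apply ba_add; auto.
    intros; apply Hn; rewrite Forall_forall in H1; auto.
  - intros b Hb'. apply Hb', partition_sums_iff. exists (A :: nil); split; [apply partl_single; auto|].
    simpl. rewrite Rabs_right; [ring| apply Rle_ge; auto].
Qed.

Lemma tv_sub mu d A : is_ba alg mu -> pa d -> alg A ->
  tv alg (fun C => mu C - d C) A <= tv alg mu A + d A.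
Proof.
  intros Hmu Hd HA.
  assert (Hb : is_ba alg (fun C => mu C - d C)).
  { destruct Hmu as [a1 [K1 b1]], Hd as [[a2 [K2 b2]] _]. split.
    - intros; rewrite a1, a2; auto; ring.
    - exists (K1 + K2); intros C HC. specialize (b1 C HC); specialize (b2 C HC).
      unfold Rminus; eapply Rle_trans; [apply Rabs_triang|]. rewrite Rabs_Ropp; lra. }
  apply (lub_le _ _ _ (tv_spec _ A Hb HA)). intros s Hs.
  apply partition_sums_iff in Hs as [l [[H1 [H2 H3]] ->]].
  assert (E : d A = sumv d l) by (rewrite H3; apply add_list; auto; apply ba_add, Hd).
  assert (sumabs (fun C => mu C - d C) l <= sumabs mu l + sumv d l).
  { clear E H3. induction l as [|B l IH]; simpl. lra. inversion H1; subst. inversion H2; subst.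
    pose proof (Rabs_triang (mu B) (- d B)). rewrite Rabs_Ropp in H.
    assert (Rabs (d B) = d B) by (apply Rabs_right, Rle_ge, Hd; auto).
    specialize (IH H4 H6). unfold Rminus at 1; lra. }
  assert (sumabs mu l <= tv alg mu A).
  { apply (tv_spec mu A Hmu HA), partition_sums_iff. exists l; split; auto. split; auto. }
  lra.
Qed.

Lemma approx_sup sig eta : is_ba alg sig -> 0 < eta ->
  exists C, alg C /\ (tv alg sig (@setT Omega) + sig (@setT Omega)) / 2 - eta < sig C.
Proof.
  intros Hb He. pose proof (tv_spec sig _ Hb (alg_T Halg)) as S.
  assert (exists s, partition_sums alg sig (@setT Omega) s /\ tv alg sig (@setT Omega) - 2 * eta < s).
  { apply NNPP; intro Hn.
    assert (tv alg sig (@setT Omega) <= tv alg sig (@setT Omega) - 2 * eta).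
    { apply S. intros s Hs. apply Rnot_lt_le; intro; apply Hn; eauto. }
    lra. }
  destruct H as [s [Hs Hlt]]. apply partition_sums_iff in Hs as [l [[H1 [H2 H3]] ->]].
  exists (Ul (filter (posb sig) l)). split.
  - apply alg_Ul, Forall_filter'; auto.
  - pose proof (sign_split sig l).
    assert (E1 : sig (Ul (filter (posb sig) l)) = sumv sig (filter (posb sig) l)).
    { apply add_list; [apply ba_add; auto| apply Forall_filter'; auto| apply FOP_filter; auto]. }
    assert (E2 : sig (@setT Omega) = sumv sig l).
    { rewrite H3; apply add_list; auto; apply ba_add; auto. }
    lra.
Qed.

Lemma setT_split (C : set Omega) : @setT Omega = setU C (setC C).
Proof. apply set_ext; intro x; unfold setT, setU, setC; split; [intros _; apply classic| auto]. Qed.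

Lemma disj_C (C : set Omega) : disj C (setC C).
Proof. intros x a b; auto. Qed.

Lemma alg_T' : alg (@setT Omega).
Proof. apply (alg_T Halg). Qed.

Lemma alg_C' (C : set Omega) : alg C -> alg (setC C).
Proof. apply (alg_C Halg). Qed.

Lemma pa_le_T w C : pa w -> alg C -> w C <= w (@setT Omega).
Proof.
  intros Hw HC. rewrite (setT_split C), (ba_add _ (proj1 Hw)); auto using alg_C', disj_C.
  pose proof (proj2 Hw _ (alg_C' C HC)); lra.
Qed.

Definition Ppos (sig : setfun Omega) (A : set Omega) := (tv alg sig A + sig A) / 2.

Lemma Ppos_add sig : is_ba alg sig -> addf (Ppos sig).
Proof.
  intros Hb A B HA HB HD. unfold Ppos. rewrite tv_add, (ba_add _ Hb); auto. field.
Qed.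

Lemma Ppos_nonneg sig A : is_ba alg sig -> alg A -> 0 <= Ppos sig A.
Proof.
  intros Hb HA. unfold Ppos. pose proof (tv_ge sig A Hb HA).
  pose proof (Rabs_le_between _ _ H). lra.
Qed.

Lemma Ppos_ge sig A : is_ba alg sig -> alg A -> sig A <= Ppos sig A.
Proof. intros Hb HA. unfold Ppos. pose proof (tv_ge_val sig A Hb HA). lra. Qed.

Lemma Ppos_mono_sub sig sig' d A : is_ba alg sig -> pa d -> alg A ->
  (forall C, sig' C = sig C - d C) -> Ppos sig' A <= Ppos sig A.
Proof.
  intros Hb Hd HA E. replace sig' with (fun C => sig C - d C) by (apply functional_extensionality; intro; rewrite E; auto).
  unfold Ppos. pose proof (tv_sub sig d A Hb Hd HA). lra.
Qed.

Lemma ba_lin rho w t : is_ba alg rho -> is_ba alg w -> is_ba alg (fun C => rho C - t * w C).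
Proof.
  intros [a1 [K1 b1]] [a2 [K2 b2]]. split.
  - intros; rewrite a1, a2; auto; ring.
  - exists (K1 + Rabs t * K2); intros C HC. specialize (b1 C HC); specialize (b2 C HC).
    unfold Rminus; eapply Rle_trans; [apply Rabs_triang|]. rewrite Rabs_Ropp, Rabs_mult.
    pose proof (Rabs_pos t). pose proof (Rmult_le_compat_l _ _ _ H b2). lra.
Qed.

Lemma pa_scale w t : pa w -> 0 <= t -> pa (fun C => t * w C).
Proof.
  intros [[a [K b]] n] Ht. split; [split|].
  - intros; rewrite a; auto; ring.
  - exists (Rabs t * K); intros C HC. rewrite Rabs_mult. apply Rmult_le_compat_l; auto. apply Rabs_pos.
  - intros; apply Rmult_le_pos; auto.
Qed.

Lemma Ppos_le_rho rho d A : pa rho -> pa d -> alg A -> Ppos (fun C => rho C - d C) A <= rho A.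
Proof.
  intros Hr Hd HA. unfold Ppos. pose proof (tv_sub rho d A (proj1 Hr) Hd HA). rewrite (tv_pa rho A Hr HA) in H. cbv beta. lra.
Qed.

Lemma Ppos_set_le sig C : is_ba alg sig -> alg C -> sig C <= Ppos sig (@setT Omega).
Proof.
  intros Hb HC. rewrite (setT_split C), Ppos_add; auto using alg_C', disj_C.
  pose proof (Ppos_ge sig C Hb HC). pose proof (Ppos_nonneg sig _ Hb (alg_C' C HC)). lra.
Qed.

Lemma cv_le_ev u l c N : Un_cv u l -> (forall n, (n >= N)%nat -> u n <= c) -> l <= c.
Proof.
  intros Hu H. apply Rnot_lt_le; intro Hlt.
  destruct (Hu (l - c)) as [N1 HN1]; [lra|].
  specialize (HN1 (max N N1) (Nat.le_max_r _ _)). specialize (H (max N N1) (Nat.le_max_l _ _)).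
  unfold R_dist in HN1. apply Rabs_def2 in HN1. lra.
Qed.

Lemma cv_ge_ev u l c N : Un_cv u l -> (forall n, (n >= N)%nat -> c <= u n) -> c <= l.
Proof.
  intros Hu H. apply Rnot_lt_le; intro Hlt.
  destruct (Hu (c - l)) as [N1 HN1]; [lra|].
  specialize (HN1 (max N N1) (Nat.le_max_r _ _)). specialize (H (max N N1) (Nat.le_max_l _ _)).
  unfold R_dist in HN1. apply Rabs_def2 in HN1. lra.
Qed.

Section Lam.
Variables rho w : setfun Omega.
Hypothesis Hrho : pa rho.
Hypothesis Hw : pa w.

Definition sgn (t : R) : setfun Omega := fun C => rho C - t * w C.
Definition Pn (n : nat) (A : set Omega) := Ppos (sgn (INR n)) A.

Lemma sgn_ba t : is_ba alg (sgn t).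
Proof. apply ba_lin; [apply Hrho| apply Hw]. Qed.

Lemma Pn_mono_real t t' A : alg A -> t <= t' -> Ppos (sgn t') A <= Ppos (sgn t) A.
Proof.
  intros HA Ht. apply Ppos_mono_sub with (d := fun C => (t' - t) * w C); auto using sgn_ba.
  apply pa_scale; auto; lra. intros; unfold sgn; ring.
Qed.

Lemma Pn_dec A : alg A -> forall n m, (n <= m)%nat -> Pn m A <= Pn n A.
Proof. intros HA n m H. apply Pn_mono_real; auto. apply le_INR; auto. Qed.

Definition Lam (A : set Omega) : R := epsilon (inhabits 0) (fun l => Un_cv (fun n => Pn n A) l).

Lemma Lam_cv A : alg A -> Un_cv (fun n => Pn n A) (Lam A).
Proof.
  intros HA. unfold Lam. apply epsilon_spec.
  destruct (decreasing_cv (fun n => Pn n A)) as [l Hl].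
  - intro n. apply Pn_dec; auto.
  - exists 0. intros x [n ->]. unfold opp_seq. pose proof (Ppos_nonneg _ A (sgn_ba (INR n)) HA). unfold Pn. lra.
  - exists l; auto.
Qed.

Lemma Lam_le_Pn A n : alg A -> Lam A <= Pn n A.
Proof. intros HA. apply (cv_le_ev _ _ _ n (Lam_cv A HA)). intros; apply Pn_dec; auto. Qed.

Lemma Lam_nonneg A : alg A -> 0 <= Lam A.
Proof. intros HA. apply (cv_ge_ev _ _ _ 0 (Lam_cv A HA)). intros; apply Ppos_nonneg; auto using sgn_ba. Qed.

Lemma Lam_le_rho A : alg A -> Lam A <= rho A.
Proof.
  intros HA. eapply Rle_trans; [apply (Lam_le_Pn A 0); auto|]. unfold Pn, sgn.
  apply (Ppos_le_rho rho (fun C => INR 0 * w C)); auto. apply pa_scale; auto. simpl; lra.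
Qed.

Lemma Lam_le_real A t : alg A -> 0 <= t -> Lam A <= Ppos (sgn t) A.
Proof.
  intros HA Ht. destruct (INR_unbounded t) as [n Hn].
  eapply Rle_trans; [apply (Lam_le_Pn A n); auto|]. apply Pn_mono_real; auto; lra.
Qed.

Lemma Lam_pa : pa Lam.
Proof.
  split; [split|].
  - intros A B HA HB HD. assert (HAB : alg (setU A B)) by (apply (alg_U Halg); auto).
    apply (UL_sequence (fun n => Pn n (setU A B))); [apply Lam_cv; auto|].
    replace (fun n => Pn n (setU A B)) with (fun n => Pn n A + Pn n B).
    + apply CV_plus; apply Lam_cv; auto.
    + apply functional_extensionality; intro n. unfold Pn. rewrite Ppos_add; auto using sgn_ba.
  - destruct Hrho as [[_ [K HK]] _]. exists K. intros A HA.
    pose proof (Lam_nonneg A HA). pose proof (Lam_le_rho A HA). pose proof (HK A HA).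
    rewrite Rabs_right by lra. pose proof (Rle_abs (rho A)). lra.
  - apply Lam_nonneg.
Qed.

Lemma Lam_perp eps : 0 < eps -> exists A, alg A /\ Lam A + w (setC A) < eps.
Proof.
  intros He. set (T := @setT Omega).
  destruct (INR_unbounded (2 * (rho T + eps) / eps)) as [n Hn].
  assert (Hrt : 0 <= rho T) by (apply Hrho, alg_T').
  assert (Hnpos : 0 < INR n).
  { eapply Rle_lt_trans; [|apply Hn]. apply Rle_ge in Hrt. unfold Rdiv.
    apply Rmult_le_pos; [lra| left; apply Rinv_0_lt_compat; lra]. }
  destruct (approx_sup (sgn (INR n)) (eps / 2) (sgn_ba _)) as [C [HC HCs]]; [lra|].
  fold (Ppos (sgn (INR n)) (@setT Omega)) in HCs.
  exists (setC C); split; [apply alg_C'; auto|].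
  rewrite setCC.
  assert (E : Pn n T = Pn n C + Pn n (setC C)).
  { unfold T; rewrite (setT_split C) at 1. unfold Pn. apply Ppos_add; auto using sgn_ba, alg_C', disj_C. }
  pose proof (Lam_le_Pn (setC C) n (alg_C' C HC)).
  pose proof (Ppos_ge (sgn (INR n)) C (sgn_ba _) HC).
  pose proof (Ppos_nonneg (sgn (INR n)) T (sgn_ba _) alg_T').
  pose proof (pa_le_T rho C Hrho HC).
  unfold Pn in *. fold T in HCs.
  change (Ppos (sgn (INR n)) T - eps/2 < sgn (INR n) C) in HCs.
  assert (Hs : sgn (INR n) C = rho C - INR n * w C) by reflexivity. fold T in H2.
  assert (INR n * w C < rho T + eps / 2) by lra.
  assert (w C < eps / 2).
  { apply Rnot_le_lt; intro Hle.
    assert (INR n * (eps / 2) <= INR n * w C) by (apply Rmult_le_compat_l; lra).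
    assert (2 * (rho T + eps) / eps * (eps / 2) = rho T + eps) by (field; lra).
    assert (2 * (rho T + eps) / eps * (eps / 2) < INR n * (eps / 2)) by (apply Rmult_lt_compat_r; lra).
    lra. }
  lra.
Qed.

End Lam.

Fixpoint fsum (f : nat -> R) (N : nat) : R :=
  match N with O => 0 | S N' => fsum f N' + f N' end.

Lemma sum_fsum f M : sum_f_R0 f M = fsum f (S M).
Proof. induction M; simpl; auto. ring. rewrite IHM; simpl; ring. Qed.

Lemma is_cv (f : nat -> R) l : infinite_sum f l -> Un_cv (fun M => sum_f_R0 f M) l.
Proof. auto. Qed.

Lemma fsum_mono f N M : (forall n, 0 <= f n) -> (N <= M)%nat -> fsum f N <= fsum f M.
Proof.
  intros Hf H; induction H; [lra|]. simpl. specialize (Hf m); lra.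
Qed.

Lemma series_ge f l N : (forall n, 0 <= f n) -> infinite_sum f l -> fsum f N <= l.
Proof.
  intros Hf Hl. apply (cv_ge_ev _ _ _ N (is_cv f l Hl)). intros M HM. rewrite sum_fsum.
  apply fsum_mono; auto.
Qed.

Lemma term_le f l n : (forall n, 0 <= f n) -> infinite_sum f l -> f n <= l.
Proof. intros Hf Hl. pose proof (series_ge f l (S n) Hf Hl). simpl in H. pose proof (fsum_mono f 0 n Hf (Nat.le_0_l _)). simpl in H0. lra. Qed.

Lemma series_nonneg f l : (forall n, 0 <= f n) -> infinite_sum f l -> 0 <= l.
Proof. intros Hf Hl. apply (series_ge f l 0 Hf Hl). Qed.

Lemma fsum_diff f g N M : (forall n, f n <= g n) -> (N <= M)%nat -> fsum f M - fsum g M <= fsum f N - fsum g N.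
Proof. intros Hf H; induction H; [lra|]. simpl. specialize (Hf m); lra. Qed.

Lemma tail_le f g lf lg N : (forall n, f n <= g n) -> infinite_sum f lf -> infinite_sum g lg ->
  lf <= fsum f N + (lg - fsum g N).
Proof.
  intros Hfg Hf Hg. pose proof (CV_minus _ _ _ _ (is_cv f lf Hf) (is_cv g lg Hg)) as Hc.
  assert (lf - lg <= fsum f N - fsum g N).
  { apply (cv_le_ev _ _ _ N Hc). intros M HM. rewrite !sum_fsum. apply fsum_diff; auto. }
  lra.
Qed.

Lemma series_le_cmp f g lf lg : (forall n, f n <= g n) -> infinite_sum f lf -> infinite_sum g lg -> lf <= lg.
Proof. intros H Hf Hg. eapply Rle_cv_lim; [|exact Hf|exact Hg]. intro n; apply sum_Rle; intros; apply H. Qed.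

Lemma series_add f g lf lg : infinite_sum f lf -> infinite_sum g lg -> infinite_sum (fun n => f n + g n) (lf + lg).
Proof.
  intros Hf Hg. pose proof (CV_plus _ _ _ _ (is_cv f lf Hf) (is_cv g lg Hg)).
  intros e He. destruct (H e He) as [N HN]. exists N; intros n Hn. rewrite sum_plus. apply HN; auto.
Qed.

Lemma series_unique f l1 l2 : infinite_sum f l1 -> infinite_sum f l2 -> l1 = l2.
Proof. intros. apply (UL_sequence _ _ _ (is_cv f l1 H) (is_cv f l2 H0)). Qed.

Definition aterm (mus : nat -> setfun Omega) (alpha : nat -> R) (A : set Omega) (n : nat) : R :=
  alpha n * tv alg (mus n) A / Rmax 1 (ba_norm alg (mus n)).

Lemma Rmax1 x : 1 <= Rmax 1 x.
Proof. apply Rmax_l. Qed.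

Lemma aterm_bounds mus alpha A n : is_ba alg (mus n) -> 0 <= alpha n -> alpha n <= 1 -> alg A ->
  0 <= aterm mus alpha A n /\ aterm mus alpha A n <= alpha n /\ aterm mus alpha A n <= tv alg (mus n) A.
Proof.
  intros Hb Ha1 Ha2 HA. unfold aterm.
  pose proof (Rmax1 (ba_norm alg (mus n))) as HR.
  pose proof (tv_nonneg _ A Hb HA) as Ht.
  assert (Ht2 : tv alg (mus n) A <= Rmax 1 (ba_norm alg (mus n))).
  { eapply Rle_trans; [apply (tv_mono _ (@setT Omega) A Hb alg_T' HA); intros; exact I|]. apply Rmax_r. }
  set (Rm := Rmax 1 (ba_norm alg (mus n))) in *.
  assert (0 < Rm) by lra.
  split; [|split].
  - unfold Rdiv; apply Rmult_le_pos; [apply Rmult_le_pos; auto| left; apply Rinv_0_lt_compat; auto].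
  - apply (Rmult_le_reg_r Rm); auto. unfold Rdiv; rewrite Rmult_assoc, Rinv_l by lra.
    rewrite Rmult_1_r. apply Rmult_le_compat_l; auto.
  - apply (Rmult_le_reg_r Rm); auto. unfold Rdiv; rewrite Rmult_assoc, Rinv_l by lra.
    rewrite Rmult_1_r, (Rmult_comm (alpha n)). apply Rmult_le_compat; auto; lra.
Qed.

Lemma convA_pa (Ms : setfun Omega -> Prop) m : (forall mu, Ms mu -> is_ba alg mu) -> convA alg Ms m ->
  pa m /\ exists mus alpha, (forall n, Ms (mus n)) /\ (forall n, 0 <= alpha n) /\ infinite_sum alpha 1 /\
     (forall n, alpha n <= 1) /\ forall A, alg A -> infinite_sum (aterm mus alpha A) (m A).
Proof.
  intros HMs [mus [alpha [H1 [H2 [H3 H4]]]]].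
  assert (Ha1 : forall n, alpha n <= 1) by (intro n; apply (term_le alpha 1 n H2 H3)).
  assert (B : forall A n, alg A -> 0 <= aterm mus alpha A n /\ aterm mus alpha A n <= alpha n /\ aterm mus alpha A n <= tv alg (mus n) A)
    by (intros; apply aterm_bounds; auto).
  split; [|exists mus, alpha; repeat split; auto].
  assert (Hn : forall A, alg A -> 0 <= m A) by (intros A HA; apply (series_nonneg _ _ (fun n => proj1 (B A n HA)) (H4 A HA))).
  split; [split|]; auto.
  - intros A C HA HC HD. assert (HAC : alg (setU A C)) by (apply (alg_U Halg); auto).
    apply (series_unique (aterm mus alpha (setU A C))); [apply H4; auto|].
    replace (aterm mus alpha (setU A C)) with (fun n => aterm mus alpha A n + aterm mus alpha C n).
    + apply series_add; apply H4; auto.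
    + apply functional_extensionality; intro n. unfold aterm. rewrite tv_add; auto. field.
      pose proof (Rmax1 (ba_norm alg (mus n))); lra.
  - exists 1. intros A HA. rewrite Rabs_right by (apply Rle_ge; auto).
    apply (series_le_cmp _ _ _ _ (fun n => proj1 (proj2 (B A n HA))) (H4 A HA) H3).
Qed.

Lemma tv0 mu : is_ba alg mu -> tv alg mu set0 = 0.
Proof.
  intros Hb. pose proof (tv_add mu set0 set0 Hb alg_0 alg_0) as E.
  rewrite setU0 in E. assert (disj set0 (@set0)) by (intros x a b; unfold set0, setC, setT in a; tauto).
  specialize (E H); lra.
Qed.

Lemma tv_subadd mu X Y : is_ba alg mu -> alg X -> alg Y -> tv alg mu (setU X Y) <= tv alg mu X + tv alg mu Y.
Proof.
  intros Hb HX HY. replace (setU X Y) with (setU X (setI Y (setC X))).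
  - rewrite tv_add; auto using alg_D. 
    + assert (Hs : forall x, setI Y (setC X) x -> Y x) by (intros x [a _]; auto).
      pose proof (tv_mono mu Y (setI Y (setC X)) Hb HY (alg_D _ _ HY HX) Hs). lra.
    + intros x a [_ b]; auto.
  - apply set_ext; intro x; unfold setU, setI, setC; split; [tauto|]. intros [a|b]; [auto|].
    destruct (classic (X x)); auto.
Qed.

Lemma fsum_bound f K c : (forall n, (n < K)%nat -> f n <= c) -> fsum f K <= INR K * c.
Proof.
  induction K; intros H; [simpl; lra|].
  rewrite S_INR. change (fsum f (S K)) with (fsum f K + f K). assert (fsum f K <= INR K * c) by (apply IHK; intros; apply H; auto).
  specialize (H K (Nat.lt_succ_diag_r _)). lra.
Qed.

Lemma dir1 (Ms : setfun Omega -> Prop) m nu lam : (forall mu, Ms mu -> is_ba alg mu) ->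
  convA alg Ms m -> is_ba alg nu -> abs_cont alg nu m -> is_ba alg lam ->
  (forall mu, Ms mu -> singular alg lam mu) -> singular alg nu lam.
Proof.
  intros HMs Hm Hnu Hac Hlam Hs eps He.
  destruct (convA_pa Ms m HMs Hm) as [Hpm [mus [alpha [H1 [H2 [H3 [H4 H5]]]]]]].
  destruct (Hac (eps / 2)) as [delta [Hd Hdel]]; [lra|].
  set (eta := Rmin delta (eps / 2)).
  assert (Heta : 0 < eta) by (unfold eta; apply Rmin_pos; lra).
  destruct (H3 (eta / 2)) as [N0 HN0]; [lra|].
  specialize (HN0 N0 (Nat.le_refl _)). rewrite sum_fsum in HN0. set (K := S N0) in *.
  unfold Rdist in HN0. apply Rabs_def2 in HN0.
  set (e' := eta / (2 * (INR K + 1))).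
  assert (He' : 0 < e') by (unfold e'; apply Rdiv_lt_0_compat; [lra| pose proof (pos_INR K); lra]).
  assert (Cl : forall k, exists B, alg B /\ tv alg lam (setC B) <= INR k * e' /\
             forall n, (n < k)%nat -> tv alg (mus n) B <= e').
  { induction k as [|k [B [HB [HB1 HB2]]]].
    - exists (@setT Omega); split; [apply alg_T'|split].
      + replace (setC (@setT Omega)) with set0 by reflexivity. rewrite tv0; auto. simpl; lra.
      + intros n Hn; inversion Hn.
    - destruct (Hs (mus k) (H1 k) e' He') as [D [HD HDs]].
      exists (setI B (setC D)). split; [apply alg_D; auto|split].
      + rewrite S_INR.
        assert (Hsub : tv alg lam (setC (setI B (setC D))) <= tv alg lam (setU (setC B) D)).
        { apply tv_mono; auto using alg_C', alg_D. apply (alg_U Halg); auto using alg_C'.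
          intros x Hx. unfold setC, setI, setU in *. destruct (classic (B x)); [right|left; auto].
          apply NNPP; intro; apply Hx; auto. }
        pose proof (tv_subadd lam (setC B) D Hlam (alg_C' _ HB) HD).
        pose proof (tv_nonneg (mus k) (setC D) (HMs _ (H1 k)) (alg_C' _ HD)). lra.
      + intros n Hn. apply Nat.lt_succ_r, Nat.le_lteq in Hn as [Hn| ->].
        * eapply Rle_trans; [|apply HB2; auto]. apply tv_mono; auto using alg_D. intros x [a _]; auto. auto.
        * eapply Rle_trans; [apply (tv_mono (mus k) (setC D)); auto using alg_D, alg_C'; intros x [_ a]; auto|].
          pose proof (tv_nonneg lam D Hlam HD). lra. }
  destruct (Cl K) as [B [HB [HB1 HB2]]].
  assert (HKe : INR K * e' < eta / 2).
  { unfold e'. pose proof (pos_INR K). apply (Rmult_lt_reg_r (2 * (INR K + 1))); [lra|].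
    unfold Rdiv. field_simplify; [|lra]. nra. }
  assert (HmB : m B < eta).
  { pose proof (tail_le (aterm mus alpha B) alpha (m B) 1 K (fun n => proj1 (proj2 (aterm_bounds mus alpha B n (HMs _ (H1 n)) (H2 n) (H4 n) HB))) (H5 B HB) H3).
    assert (fsum (aterm mus alpha B) K <= INR K * e').
    { apply fsum_bound. intros n Hn. eapply Rle_trans; [apply (aterm_bounds mus alpha B n (HMs _ (H1 n)) (H2 n) (H4 n) HB)| auto]. }
    lra. }
  exists B; split; auto.
  assert (tv alg m B < delta).
  { rewrite tv_pa; auto. assert (eta <= delta) by apply Rmin_l. lra. }
  specialize (Hdel B HB H).
  assert (eta <= eps / 2) by apply Rmin_r. lra.
Qed.

Lemma tv_is_pa mu : is_ba alg mu -> pa (tv alg mu).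
Proof.
  intros Hb. split; [split|].
  - intros; apply tv_add; auto.
  - exists (tv alg mu (@setT Omega)). intros A HA. rewrite Rabs_right by (apply Rle_ge, tv_nonneg; auto).
    apply tv_mono; auto using alg_T'. intros; exact I.
  - intros; apply tv_nonneg; auto.
Qed.

Definition wF (F : list (setfun Omega)) : setfun Omega := fun A => fold_right (fun mu acc => tv alg mu A + acc) 0 F.

Lemma wF_pa F : Forall (is_ba alg) F -> pa (wF F).
Proof.
  induction 1 as [|mu F Hmu HF IH].
  - split; [split|]; unfold wF; simpl. intros; ring. exists 0; intros; rewrite Rabs_R0; lra. intros; lra.
  - destruct IH as [[Ha [K HK]] Hn]. pose proof (tv_is_pa mu Hmu) as [[Ta [K' HK']] Tn].
    split; [split|]; unfold wF in *; simpl.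
    + intros A B HA HB HD. rewrite Ta, Ha; auto; ring.
    + exists (K' + K); intros A HA. eapply Rle_trans; [apply Rabs_triang|]. specialize (HK A HA); specialize (HK' A HA); lra.
    + intros A HA. specialize (Tn A HA); specialize (Hn A HA); lra.
Qed.

Lemma wF_app F G A : wF (F ++ G) A = wF F A + wF G A.
Proof. unfold wF; induction F; simpl; [ring| rewrite IHF; ring]. Qed.

Lemma wF_seq (mus : nat -> setfun Omega) N A : wF (map mus (seq 0 N)) A = fsum (fun i => tv alg (mus i) A) N.
Proof.
  induction N; [reflexivity|]. rewrite seq_S, map_app, wF_app, IHN. simpl. unfold wF; simpl. ring.
Qed.

Definition geo (n : nat) : R := (/ 2) ^ (S n).

Lemma geo_fsum N : fsum geo N = 1 - (/ 2) ^ N.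
Proof. induction N; simpl; [ring|]. rewrite IHN. unfold geo; simpl. field. Qed.

Lemma geo_sum : infinite_sum geo 1.
Proof.
  intros e He. destruct (pow_lt_1_zero (/ 2)) with (y := e) as [N HN]; auto.
  rewrite Rabs_right by lra; lra.
  exists N; intros n Hn. rewrite sum_fsum, geo_fsum. unfold Rdist.
  replace (1 - (/ 2) ^ S n - 1) with (- ((/ 2) ^ S n)) by ring. rewrite Rabs_Ropp. apply HN. auto.
Qed.

Lemma geo_pos n : 0 < geo n.
Proof. unfold geo. apply pow_lt. lra. Qed.

Section Dir2.
Variable Ms : setfun Omega -> Prop.
Hypothesis HMs : forall mu, Ms mu -> is_ba alg mu.
Variable nu : setfun Omega.
Hypothesis Hnu : is_ba alg nu.

Definition rho := tv alg nu.
Lemma Hrho : pa rho.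
Proof. apply tv_is_pa; auto. Qed.

Definition hF (F : list (setfun Omega)) (k : nat) := Ppos (sgn rho (wF F) (INR k)) (@setT Omega).

Lemma Forall_ba F : Forall Ms F -> Forall (is_ba alg) F.
Proof. intro H; eapply Forall_impl; [|exact H]; auto. Qed.

Lemma hF_nonneg F k : Forall Ms F -> 0 <= hF F k.
Proof. intros; unfold hF; apply Ppos_nonneg; [apply sgn_ba; [apply Hrho| apply wF_pa, Forall_ba; auto]| apply alg_T']. Qed.

Lemma m_build mus : (forall n, Ms (mus n)) -> exists m, convA alg Ms m /\ pa m /\
   (forall A, alg A -> infinite_sum (aterm mus geo A) (m A)).
Proof.
  intros Hmus.
  assert (Hg1 : forall n, geo n <= 1) by (intro n; apply (term_le geo 1 n (fun k => Rlt_le _ _ (geo_pos k)) geo_sum)).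
  set (m := fun A => epsilon (inhabits 0) (fun l => infinite_sum (aterm mus geo A) l)).
  assert (Hm : forall A, alg A -> infinite_sum (aterm mus geo A) (m A)).
  { intros A HA. unfold m. apply epsilon_spec.
    destruct (Rseries_CV_comp (aterm mus geo A) geo) as [l Hl].
    - intro n. pose proof (aterm_bounds mus geo A n (HMs _ (Hmus n)) (Rlt_le _ _ (geo_pos n)) (Hg1 n) HA). tauto.
    - exists 1; apply geo_sum.
    - exists l; auto. }
  assert (HcA : convA alg Ms m).
  { exists mus, geo. repeat split; auto. intro n; apply Rlt_le, geo_pos. apply geo_sum. }
  exists m; split; auto. split; auto. apply (proj1 (convA_pa Ms m HMs HcA)).
Qed.

Lemma dominate mus m F : (forall n, Ms (mus n)) -> pa m -> (forall A, alg A -> infinite_sum (aterm mus geo A) (m A)) ->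
  (forall mu, In mu F -> exists n, mus n = mu) -> exists C, 0 <= C /\ forall A, alg A -> wF F A <= C * m A.
Proof.
  intros Hmus Hm Hser. induction F as [|mu F IH]; intros HF.
  - exists 0; split; [lra|]. intros A HA; unfold wF; simpl. lra.
  - destruct IH as [C [HC HCA]]. intros; apply HF; simpl; auto.
    destruct (HF mu (or_introl eq_refl)) as [n <-].
    assert (Hg1 : forall n, geo n <= 1) by (intro k; apply (term_le geo 1 k (fun k => Rlt_le _ _ (geo_pos k)) geo_sum)).
    set (Rm := Rmax 1 (ba_norm alg (mus n))).
    assert (HRm : 1 <= Rm) by apply Rmax1.
    pose proof (geo_pos n).
    exists (C + Rm / geo n); split.
    + apply Rplus_le_le_0_compat; auto. unfold Rdiv; apply Rmult_le_pos; [lra| left; apply Rinv_0_lt_compat; lra].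
    + intros A HA. unfold wF; simpl. fold (wF F A). specialize (HCA A HA).
      assert (Ht : aterm mus geo A n <= m A).
      { apply (term_le _ _ n); [|apply Hser; auto]. intro k.
        apply (aterm_bounds mus geo A k (HMs _ (Hmus k)) (Rlt_le _ _ (geo_pos k)) (Hg1 k) HA). }
      unfold aterm in Ht. fold Rm in Ht.
      assert (tv alg (mus n) A <= Rm / geo n * m A).
      { apply (Rmult_le_reg_l (geo n / Rm)). apply Rdiv_lt_0_compat; lra.
        replace (geo n / Rm * (Rm / geo n * m A)) with (m A) by (field; lra).
        replace (geo n / Rm * tv alg (mus n) A) with (geo n * tv alg (mus n) A / Rm) by (field; lra). auto. }
      pose proof (proj2 Hm A HA). nra.
Qed.

Lemma pa_plus a b : pa a -> pa b -> pa (fun A => a A + b A).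
Proof.
  intros [[a1 [K1 b1]] n1] [[a2 [K2 b2]] n2]. split; [split|].
  - intros; rewrite a1, a2; auto; ring.
  - exists (K1 + K2); intros A HA. eapply Rle_trans; [apply Rabs_triang|]. specialize (b1 A HA); specialize (b2 A HA); lra.
  - intros A HA; specialize (n1 A HA); specialize (n2 A HA); lra.
Qed.

Lemma fsum_le f g N : (forall n, f n <= g n) -> fsum f N <= fsum g N.
Proof. intro H; induction N; simpl; [lra|]. specialize (H N); lra. Qed.

Lemma le_eps a b : (forall eta, 0 < eta -> a - eta <= b) -> a <= b.
Proof. intros H. apply Rnot_lt_le; intro. specialize (H ((a - b)/2)). lra. Qed.

Lemma lower mus m gamma mu : (forall n, Ms (mus n)) -> pa m -> (forall A, alg A -> infinite_sum (aterm mus geo A) (m A)) ->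
  (forall F k, Forall Ms F -> gamma <= hF F k) -> Ms mu ->
  forall n, gamma <= Ppos (sgn rho (fun A => m A + tv alg mu A) (INR n)) (@setT Omega).
Proof.
  intros Hmus Hm Hser Hg Hmu n.
  assert (Hg1 : forall n, geo n <= 1) by (intro k; apply (term_le geo 1 k (fun k => Rlt_le _ _ (geo_pos k)) geo_sum)).
  assert (Hw' : pa (fun A => m A + tv alg mu A)) by (apply pa_plus; auto; apply tv_is_pa; auto).
  apply le_eps; intros eta He.
  destruct (pow_lt_1_zero (/ 2)) with (y := eta / 2 / (INR n + 1)) as [N HN].
  { rewrite Rabs_right by lra; lra. }
  { pose proof (pos_INR n). apply Rdiv_lt_0_compat; lra. }
  specialize (HN N (Nat.le_refl _)). rewrite Rabs_right in HN by (apply Rle_ge, pow_le; lra).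
  set (L := mu :: map mus (seq 0 N)).
  assert (HL : Forall Ms L).
  { constructor; auto. apply Forall_forall; intros x Hx. apply in_map_iff in Hx as [i [<- _]]; auto. }
  assert (HLpa : pa (wF L)) by (apply wF_pa, Forall_ba; auto).
  specialize (Hg L n HL). unfold hF in Hg.
  destruct (approx_sup (sgn rho (wF L) (INR n)) (eta / 2) (sgn_ba _ _ Hrho HLpa _)) as [C [HC HCs]]; [lra|].
  fold (Ppos (sgn rho (wF L) (INR n)) (@setT Omega)) in HCs.
  pose proof (Ppos_set_le _ C (sgn_ba _ _ Hrho Hw' (INR n)) HC) as HP.
  assert (Hmc : m C <= wF (map mus (seq 0 N)) C + (/ 2) ^ N).
  { pose proof (tail_le (aterm mus geo C) geo (m C) 1 N
      (fun k => proj1 (proj2 (aterm_bounds mus geo C k (HMs _ (Hmus k)) (Rlt_le _ _ (geo_pos k)) (Hg1 k) HC))) (Hser C HC) geo_sum).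
    rewrite geo_fsum in H. rewrite wF_seq.
    assert (fsum (aterm mus geo C) N <= fsum (fun i => tv alg (mus i) C) N).
    { apply fsum_le; intro k. apply (aterm_bounds mus geo C k (HMs _ (Hmus k)) (Rlt_le _ _ (geo_pos k)) (Hg1 k) HC). }
    lra. }
  assert (EL : wF L C = tv alg mu C + wF (map mus (seq 0 N)) C) by reflexivity.
  assert (E1 : sgn rho (wF L) (INR n) C = rho C - INR n * wF L C) by reflexivity.
  assert (E2 : sgn rho (fun A => m A + tv alg mu A) (INR n) C = rho C - INR n * (m C + tv alg mu C)) by reflexivity.
  assert (Hnp : INR n * (/ 2) ^ N <= eta / 2).
  { pose proof (pos_INR n). apply (Rmult_lt_compat_l (INR n + 1)) in HN; [|lra].
    replace ((INR n + 1) * (eta / 2 / (INR n + 1))) with (eta / 2) in HN by (field; lra).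
    pose proof (pow_le (/2) N). nra. }
  assert (INR n * m C <= INR n * (wF (map mus (seq 0 N)) C + (/ 2) ^ N)) by (apply Rmult_le_compat_l; auto; apply pos_INR).
  nra.
Qed.

Lemma nth_Forall (P : setfun Omega -> Prop) l d i : Forall P l -> P d -> P (nth i l d).
Proof.
  intros Hl Hd. destruct (Nat.lt_ge_cases i (length l)).
  - rewrite Forall_forall in Hl; apply Hl, nth_In; auto.
  - rewrite nth_overflow; auto.
Qed.

Lemma dir2 mu0 : Ms mu0 -> perp alg (perp alg Ms) nu -> exists m, convA alg Ms m /\ abs_cont alg nu m.
Proof.
  intros Hmu0 [_ Hpp].
  set (E := fun r => exists F k, Forall Ms F /\ r = - hF F k).
  destruct (completeness E) as [g Hg].
  { exists 0. intros r [F [k [HF ->]]]. pose proof (hF_nonneg F k HF); lra. }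
  { exists (- hF nil 0). exists nil, 0%nat; split; auto. }
  set (gamma := - g).
  assert (Hlow : forall F k, Forall Ms F -> gamma <= hF F k).
  { intros F k HF. assert (- hF F k <= g) by (apply Hg; exists F, k; auto). unfold gamma; lra. }
  assert (Happ : forall eta, 0 < eta -> exists p : list (setfun Omega) * nat, Forall Ms (fst p) /\ hF (fst p) (snd p) < gamma + eta).
  { intros eta He. apply NNPP; intro Hn.
    assert (g <= - gamma - eta).
    { apply Hg. intros r [F [k [HF ->]]]. apply Rnot_lt_le; intro; apply Hn. exists (F, k); simpl; split; auto. lra. }
    unfold gamma in H; lra. }
  set (FK := fun j : nat => epsilon (inhabits (@nil (setfun Omega), 0%nat))
     (fun p => Forall Ms (fst p) /\ hF (fst p) (snd p) < gamma + / (INR j + 1))).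
  assert (HFK : forall j, Forall Ms (fst (FK j)) /\ hF (fst (FK j)) (snd (FK j)) < gamma + / (INR j + 1)).
  { intro j. unfold FK. apply epsilon_spec. apply Happ. pose proof (pos_INR j). apply Rinv_0_lt_compat; lra. }
  set (mus := fun n => let (j, i) := Cantor.of_nat n in nth i (fst (FK j)) mu0).
  assert (Hmus : forall n, Ms (mus n)).
  { intro n. unfold mus. destruct (Cantor.of_nat n) as [j i]. apply nth_Forall; auto. apply HFK. }
  assert (Hcov : forall j mu, In mu (fst (FK j)) -> exists n, mus n = mu).
  { intros j mu Hin. destruct (In_nth _ _ mu0 Hin) as [i [_ Hi]]. exists (Cantor.to_nat (j, i)).
    unfold mus. rewrite Cantor.cancel_of_to. auto. }
  destruct (m_build mus Hmus) as [m [HcA [Hm Hser]]].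
  exists m; split; auto.
  set (LamM := Lam rho m).
  assert (HLpa : pa LamM) by (apply Lam_pa; [apply Hrho| auto]).
  assert (Hup : LamM (@setT Omega) <= gamma).
  { apply le_eps. intros eta He.
    destruct (INR_unbounded (/ eta)) as [j Hj].
    destruct (HFK j) as [HF Hh].
    destruct (dominate mus m (fst (FK j)) Hmus Hm Hser (Hcov j)) as [C [HC HCA]].
    set (F := fst (FK j)) in *. set (k := snd (FK j)) in *.
    assert (HFpa : pa (wF F)) by (apply wF_pa, Forall_ba; auto).
    assert (Hd : pa (fun A => INR k * ((C * m A) - 1 * wF F A))).
    { apply pa_scale; [|apply pos_INR]. split.
      - apply ba_lin; [apply pa_scale; auto|apply HFpa].
      - intros A HA. specialize (HCA A HA). lra. }
    assert (H1 : LamM (@setT Omega) <= Ppos (sgn rho m (INR k * C)) (@setT Omega)).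
    { apply Lam_le_real; [apply Hrho| auto| apply alg_T'| apply Rmult_le_pos; auto; apply pos_INR]. }
    assert (H2 : Ppos (sgn rho m (INR k * C)) (@setT Omega) <= hF F k).
    { unfold hF. apply (Ppos_mono_sub _ _ _ _ (sgn_ba _ _ Hrho HFpa _) Hd alg_T').
      intros A; unfold sgn; ring. }
    assert (/ (INR j + 1) < eta).
    { pose proof (pos_INR j). apply (Rmult_lt_reg_l (INR j + 1)); [lra|].
      rewrite Rinv_r by lra. apply (Rmult_lt_reg_l (/ eta)). apply Rinv_0_lt_compat; auto.
      replace (/ eta * (( INR j + 1) * eta)) with (INR j + 1) by (field; lra). lra. }
    lra. }
  assert (Hsing : forall mu, Ms mu -> singular alg LamM mu).
  { intros mu Hmu.
    set (w' := fun A => m A + tv alg mu A).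
    assert (Hw' : pa w') by (apply pa_plus; auto; apply tv_is_pa; auto).
    set (LamW := Lam rho w').
    assert (HWpa : pa LamW) by (apply Lam_pa; [apply Hrho| auto]).
    assert (HlowW : gamma <= LamW (@setT Omega)).
    { apply (cv_ge_ev _ _ _ 0 (Lam_cv rho w' Hrho Hw' _ alg_T')). intros n _. unfold Pn.
      apply (lower mus m gamma mu Hmus Hm Hser Hlow Hmu n). }
    assert (Hle : forall A, alg A -> LamW A <= LamM A).
    { intros A HA. eapply Rle_cv_lim; [| apply (Lam_cv rho w' Hrho Hw' _ HA)| apply (Lam_cv rho m Hrho Hm _ HA)].
      intro n. unfold Pn. apply (Ppos_mono_sub _ _ (fun C => INR n * tv alg mu C) _ (sgn_ba _ _ Hrho Hm _)); auto.
      apply pa_scale; [apply tv_is_pa; auto| apply pos_INR].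
      intro C; unfold sgn, w'; ring. }
    assert (Heq : forall A, alg A -> LamW A = LamM A).
    { intros A HA. pose proof (Hle A HA). pose proof (Hle _ (alg_C' A HA)).
      assert (LamM (@setT Omega) = LamM A + LamM (setC A)).
      { rewrite (setT_split A) at 1. apply (ba_add _ (proj1 HLpa)); auto using alg_C', disj_C. }
      assert (LamW (@setT Omega) = LamW A + LamW (setC A)).
      { rewrite (setT_split A) at 1. apply (ba_add _ (proj1 HWpa)); auto using alg_C', disj_C. }
      lra. }
    intros eps He. destruct (Lam_perp rho w' Hrho Hw' eps He) as [A [HA HAs]].
    exists A; split; auto. rewrite tv_pa; auto. rewrite <- Heq; auto.
    assert (tv alg mu (setC A) <= w' (setC A)).
    { unfold w'. pose proof (proj2 Hm _ (alg_C' A HA)). lra. }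
    change (LamW A + w' (setC A) < eps) in HAs. lra. }
  assert (HpM : perp alg Ms LamM) by (split; [apply HLpa| auto]).
  specialize (Hpp LamM HpM).
  assert (Hzero : LamM (@setT Omega) <= 0).
  { apply le_eps. intros eta He. destruct (Hpp eta He) as [A [HA HAs]].
    rewrite (tv_pa LamM) in HAs; auto using alg_C'.
    assert (LamM (@setT Omega) = LamM A + LamM (setC A)).
    { rewrite (setT_split A) at 1. apply (ba_add _ (proj1 HLpa)); auto using alg_C', disj_C. }
    pose proof (Lam_le_rho rho m Hrho Hm A HA). change (LamM A <= tv alg nu A) in H0. lra. }
  intros eps He.
  destruct (Lam_cv rho m Hrho Hm _ alg_T' (eps / 2)) as [N HN]; [lra|].
  specialize (HN (S N) (Nat.le_succ_diag_r _)). unfold Rdist in HN. apply Rabs_def2 in HN.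
  fold LamM in HN.
  assert (Hn : 0 < INR (S N)) by (apply lt_0_INR; lia).
  exists (eps / (2 * INR (S N))). split; [apply Rdiv_lt_0_compat; lra|].
  intros A HA HmA. rewrite tv_pa in HmA; auto.
  pose proof (Ppos_set_le _ A (sgn_ba _ _ Hrho Hm (INR (S N))) HA) as HP.
  assert (Es : sgn rho m (INR (S N)) A = rho A - INR (S N) * m A) by reflexivity.
  unfold Pn in HN.
  assert (INR (S N) * m A < eps / 2).
  { apply (Rmult_lt_compat_l (INR (S N))) in HmA; auto.
    replace (INR (S N) * (eps / (2 * INR (S N)))) with (eps / 2) in HmA by (field; lra). auto. }
  fold rho. lra.
Qed.

End Dir2.

End TV.

Theorem mainTheorem2 (Omega : Type) (alg : set Omega -> Prop)
  (Halg : is_algebra alg) (M : setfun Omega -> Prop)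
  (HM : forall mu, M mu -> is_ba alg mu)
  (HMne : exists mu, M mu) :
  forall nu : setfun Omega,
    Lset alg M nu <-> perp alg (perp alg M) nu.
Proof.
  intros nu; split.
  - intros [Hnu [m [Hm Hac]]]. split; auto.
    intros lam [Hlam Hs]. eapply dir1; eauto.
  - intros Hp. destruct HMne as [mu0 Hmu0]. pose proof (proj1 Hp) as Hnu.
    split; auto. eapply dir2; eauto.
Qed.
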